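(* Let $p,s\in\mathbf R$ with $s>0$. For a positive integer $n$, an arbitrary $n\times n$ complex matrix $H$ and a positive semidefinite $n\times n$ matrix $L$, define on positive definite $n\times n$ matrices $A$ \[ \psi_{L,H}(A)=\operatorname{Tr}\bigl(L+H^*A^pH\bigr)^s . \] Then the following are equivalent: (i) for every $n$, every $n\times n$ matrix $H$ and every positive semidefinite $n\times n$ matrix $L$, the map $A\mapsto\psi_{L,H}(A)$ is convex; (ii) for every $n$ and every $n\times n$ matrix $H$, the map $A\mapsto\psi_{0,H}(A)$ is convex. The same equivalence holds with ''convex'' replaced by ''concave''.
   Context: $A^p$ is defined by functional calculus for positive definite $A$; for a positive semidefinite matrix $M$ and $s>0$, $M^s$ is defined by functional calculus with the convention $0^s=0$. *)

(* Defs.v *)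
From HB Require Import structures.
From mathcomp Require Import all_boot all_order all_algebra.
From mathcomp Require Import boolp reals exp.
From mathcomp Require Import complex.
Set Implicit Arguments. Unset Strict Implicit. Unset Printing Implicit Defensive.
Import Order.TTheory GRing.Theory Num.Theory.
Local Open Scope ring_scope.

Section MatrixDefs.
Variable R : realType.
Local Notation C := (complex R).

Definition rC (x : R) : C := Complex x 0.

Definition adj_mx m n (A : 'M[C]_(m, n)) : 'M[C]_(n, m) :=
  map_mx (fun z : C => Num.conj z) A^T.

Definition hermitian n (A : 'M[C]_n) : Prop := adj_mx A = A.

(* positive semidefinite / positive definite (order of the numClosedField C:
   0 <= z means z is real and nonnegative) *)
Definition psd n (A : 'M[C]_n) : Prop :=
  hermitian A /\ forall v : 'cV[C]_n, 0 <= (adj_mx v *m A *m v) 0 0.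
Definition pd n (A : 'M[C]_n) : Prop :=
  hermitian A /\ forall v : 'cV[C]_n, v != 0 -> 0 < (adj_mx v *m A *m v) 0 0.

Definition unitary n (U : 'M[C]_n) : Prop := adj_mx U *m U = 1%:M.

Definition spec_decomp n (M : 'M[C]_n) (Ud : 'M[C]_n * 'rV[R]_n) : Prop :=
  unitary Ud.1 /\ M = Ud.1 *m diag_mx (map_mx rC Ud.2) *m adj_mx Ud.1.

(* functional calculus f(M) := U diag(f(d)) U^* for a (chosen) spectral
   decomposition of M (exists for every Hermitian M); 0 if M has none. *)
Definition mxfun n (f : R -> R) (M : 'M[C]_n) : 'M[C]_n :=
  match pselect (exists Ud, spec_decomp M Ud) with
  | left H => let Ud := proj1_sig (cid H) in
      Ud.1 *m diag_mx (map_mx (fun x => rC (f x)) Ud.2) *m adj_mx Ud.1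
  | right _ => 0
  end.

(* M^s via functional calculus with real power powR; powR 0 s = 0 for s <> 0 *)
Definition mxpow n (M : 'M[C]_n) (s : R) : 'M[C]_n := mxfun (fun x => powR x s) M.

(* psi_{L,H}(A) = Tr (L + H^* A^p H)^s  (a real number; we take its real part) *)
Definition psi n (p s : R) (L H : 'M[C]_n) (A : 'M[C]_n) : R :=
  complex.Re (\tr (mxpow (L + adj_mx H *m mxpow A p *m H) s)).

Definition convex_pd n (f : 'M[C]_n -> R) : Prop :=
  forall A B : 'M[C]_n, pd A -> pd B -> forall t : R, 0 <= t <= 1 ->
    f (rC t *: A + rC (1 - t) *: B) <= t * f A + (1 - t) * f B.
Definition concave_pd n (f : 'M[C]_n -> R) : Prop :=
  forall A B : 'M[C]_n, pd A -> pd B -> forall t : R, 0 <= t <= 1 ->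
    t * f A + (1 - t) * f B <= f (rC t *: A + rC (1 - t) *: B).

End MatrixDefs.

(* Main.v *)
Require Import Defs.
From HB Require Import structures.
From mathcomp Require Import all_boot all_order all_algebra.
From mathcomp Require Import boolp reals exp.
From mathcomp Require Import complex.
Import Order.TTheory GRing.Theory Num.Theory Num.Def.
Local Open Scope ring_scope.
Section S.
Variable R : realType.
Local Notation C := (complex R).
Implicit Types (x y : R).

Lemma rCD x y : rC (x + y) = rC x + rC y.
Proof. by rewrite /rC; apply/eqP; rewrite eq_complex /= addr0 !eqxx. Qed.
Lemma rCM x y : rC (x * y) = rC x * rC y.
Proof. by rewrite /rC; apply/eqP; rewrite eq_complex /= !mulr0 mul0r subr0 addr0 !eqxx. Qed.
Lemma rC1 : rC (1:R) = 1. Proof. by []. Qed.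
Lemma rC0 : rC (0:R) = 0. Proof. by []. Qed.
Lemma rC_conj x : Num.conj (rC x) = rC x.
Proof. by rewrite /rC; apply/eqP; rewrite eq_complex /= oppr0 !eqxx. Qed.
Lemma rC_ge0 x : (0 <= rC x) = (0 <= x).
Proof. by rewrite /rC lecE /= eqxx. Qed.
Lemma rC_inj x y : rC x = rC y -> x = y.
Proof. by case. Qed.
Local Notation adj := (@adj_mx R _ _).

Lemma adjM m n k (A : 'M[C]_(m, n)) (B : 'M[C]_(n, k)) : adj (A *m B) = adj B *m adj A.
Proof. by rewrite /adj_mx trmx_mul map_mxM. Qed.
Lemma adjK m n (A : 'M[C]_(m, n)) : adj (adj A) = A.
Proof. by apply/matrixP => i j; rewrite !mxE conjCK. Qed.
Lemma adjD m n (A B : 'M[C]_(m, n)) : adj (A + B) = adj A + adj B.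
Proof. by apply/matrixP => i j; rewrite !mxE rmorphD. Qed.
Lemma adjZ m n a (A : 'M[C]_(m, n)) : adj (a *: A) = Num.conj a *: adj A.
Proof. by apply/matrixP => i j; rewrite !mxE rmorphM. Qed.
Lemma adj0 m n : adj (0 : 'M[C]_(m, n)) = 0.
Proof. by apply/matrixP => i j; rewrite !mxE rmorph0. Qed.
Lemma adj1 n : adj (1%:M : 'M[C]_n) = 1%:M.
Proof. by apply/matrixP => i j; rewrite !mxE eq_sym; case: eqP; rewrite /= ?rmorph1 ?rmorph0. Qed.
Lemma adj_block m1 m2 n1 n2 (A : 'M[C]_(m1, n1)) (B : 'M[C]_(m1, n2))
  (D : 'M[C]_(m2, n1)) (E : 'M[C]_(m2, n2)) :
  adj (block_mx A B D E) = block_mx (adj A) (adj D) (adj B) (adj E).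
Proof. by rewrite /adj_mx tr_block_mx map_block_mx. Qed.
Lemma adj_diag n (d : 'rV[R]_n) : adj (diag_mx (map_mx (@rC R) d)) = diag_mx (map_mx (@rC R) d).
Proof.
apply/matrixP => i j; rewrite !mxE eq_sym; case: eqP => [->|]; rewrite /= ?mulr1n ?mulr0n ?rC_conj //.
Qed.

Lemma unitaryC n (U : 'M[C]_n) : unitary U -> U *m adj U = 1%:M.
Proof. by move=> /mulmx1C. Qed.

Lemma spec_unique n (f : R -> R) (M : 'M[C]_n) U d V e :
  spec_decomp M (U, d) -> spec_decomp M (V, e) ->
  U *m diag_mx (map_mx (fun x => rC (f x)) d) *m adj U =
  V *m diag_mx (map_mx (fun x => rC (f x)) e) *m adj V.
Proof.
move=> [/= uU MU] [/= uV MV].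
pose W := adj V *m U.
have hW : diag_mx (map_mx (@rC R) e) *m W = W *m diag_mx (map_mx (@rC R) d).
  have := congr1 (fun X => adj V *m X *m U) (etrans (esym MV) MU).
  by rewrite /= !mulmxA uV mul1mx -!mulmxA uU mulmx1 !mulmxA.
have hW' : diag_mx (map_mx (fun x => rC (f x)) e) *m W = W *m diag_mx (map_mx (fun x => rC (f x)) d).
  move: W hW => W hW.
  apply/matrixP => i j; move/matrixP: hW => /(_ i j).
  rewrite !mul_diag_mx !mul_mx_diag !mxE.
  have [->|Wn0] := eqVneq (W i j) 0.
    by move=> _; rewrite mulr0 mul0r.
  move=> h.
  have : rC (e 0 i) = rC (d 0 j).
    by apply: (mulIf Wn0); rewrite h mulrC.
  by move/rC_inj => ->; rewrite mulrC.
have wW : W *m adj W = 1%:M.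
  by rewrite /W adjM adjK mulmxA -(mulmxA _ U) unitaryC // mulmx1 uV.
have -> : U = V *m W by rewrite /W mulmxA unitaryC // mul1mx.
rewrite adjM -!mulmxA; congr (_ *m _); rewrite !mulmxA -hW'.
by rewrite -(mulmxA _ W) wW mulmx1.
Qed.

Lemma mxfunE n (f : R -> R) (M : 'M[C]_n) U d : spec_decomp M (U, d) ->
  mxfun f M = U *m diag_mx (map_mx (fun x => rC (f x)) d) *m adj U.
Proof.
move=> sd; rewrite /mxfun; case: pselect => [h|[]]; last by exists (U, d).
case: (cid h) => [[V e]] /= sd'.
exact: spec_unique sd' sd.
Qed.
Lemma rCRe (z : C) : z \is Num.real -> rC (complex.Re z) = z.
Proof.
case: z => a b; rewrite realE /rC /= !lecE /=.
by case/orP => /andP [/eqP -> _].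
Qed.

Lemma herm_decomp n (M : 'M[C]_n) : Defs.hermitian M -> exists Ud, spec_decomp M Ud.
Proof.
move=> hM.
have hs : M \is hermsymmx.
  by apply/is_hermitianmxP; rewrite expr0 scale1r; exact: (esym hM).
have /orthomx_spectralP eM := hermitian_normalmx hs.
have rl := hermitian_spectral_diag_real hs.
have uP := spectral_unitarymx M.
exists (adj (spectralmx M), map_mx (@complex.Re R) (spectral_diag M)); split => /=.
  by rewrite /unitary adjK; apply/unitarymxP.
have -> : map_mx (@rC R) (map_mx (@complex.Re R) (spectral_diag M)) = spectral_diag M.
  apply/matrixP => i j; rewrite !mxE rCRe //.
  by move/mxOverP: rl; apply.
by rewrite adjK {1}eM invmx_unitary.
Qed.
Lemma unitary_block n1 n2 (U : 'M[C]_n1) (V : 'M[C]_n2) : unitary U -> unitary V ->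
  unitary (block_mx U 0 0 V).
Proof.
move=> uU uV; rewrite /unitary adj_block !adj0 mulmx_block uU uV.
by rewrite !mulmx0 !mul0mx !addr0 !add0r -scalar_mx_block.
Qed.

Lemma mxfun_block n1 n2 (f : R -> R) (X : 'M[C]_n1) (Y : 'M[C]_n2) :
  Defs.hermitian X -> Defs.hermitian Y ->
  mxfun f (block_mx X 0 0 Y) = block_mx (mxfun f X) 0 0 (mxfun f Y).
Proof.
move=> /herm_decomp [[U d] sX] /herm_decomp [[V e] sY].
rewrite (mxfunE _ f _ _ _ sX) (mxfunE _ f _ _ _ sY).
have sB : spec_decomp (block_mx X 0 0 Y) (block_mx U 0 0 V, row_mx d e).
  case: sX => /= uU ->; case: sY => /= uV ->; split => /=; first exact: unitary_block.
  rewrite map_row_mx diag_mx_row adj_block !adj0 !mulmx_block.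
  by rewrite !(mulmx0, mul0mx, addr0, add0r).
rewrite (mxfunE _ f _ _ _ sB) /= map_row_mx diag_mx_row adj_block !adj0 !mulmx_block.
by rewrite !(mulmx0, mul0mx, addr0, add0r).
Qed.

Lemma mxfun1 n (f : R -> R) : f 1 = 1 -> mxfun f (1%:M : 'M[C]_n) = 1%:M.
Proof.
move=> f1.
have s1 : spec_decomp (1%:M : 'M[C]_n) (1%:M, const_mx 1).
  split => /=; first by rewrite /unitary adj1 mulmx1.
  by rewrite adj1 mulmx1 mul1mx map_const_mx diag_const_mx.
by rewrite (mxfunE _ f _ _ _ s1) /= adj1 mulmx1 mul1mx map_const_mx f1 diag_const_mx.
Qed.

Lemma mxfun0 n (f : R -> R) : f 0 = 0 -> mxfun f (0 : 'M[C]_n) = 0.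
Proof.
move=> f0.
have s0 : spec_decomp (0 : 'M[C]_n) (1%:M, const_mx 0).
  split => /=; first by rewrite /unitary adj1 mulmx1.
  by rewrite adj1 mulmx1 mul1mx map_const_mx diag_const_mx rC0; apply/matrixP => i j; rewrite !mxE mul0rn.
by rewrite (mxfunE _ f _ _ _ s0) /= adj1 mulmx1 mul1mx map_const_mx f0 diag_const_mx rC0; apply/matrixP => i j; rewrite !mxE mul0rn.
Qed.
Lemma adj_diagf n (g : R -> R) (d : 'rV[R]_n) :
  adj (diag_mx (map_mx (fun x => rC (g x)) d)) = diag_mx (map_mx (fun x => rC (g x)) d).
Proof.
apply/matrixP => i j; rewrite !mxE eq_sym; case: eqP => [->|]; rewrite /= ?mulr1n ?mulr0n ?rC_conj //.
Qed.

Lemma herm_mxfun n (f : R -> R) (M : 'M[C]_n) : Defs.hermitian (mxfun f M).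
Proof.
rewrite /mxfun; case: pselect => [h|_]; last by rewrite /Defs.hermitian adj0.
case: (cid h) => [[U d]] _ /=.
by rewrite /Defs.hermitian !adjM adjK adj_diagf mulmxA.
Qed.
Lemma quad_delta n (A : 'M[C]_n) (i : 'I_n) : (adj (delta_mx i 0 : 'cV[C]_n) *m A *m (delta_mx i 0 : 'cV[C]_n)) 0 0 = A i i.
Proof.
have -> : adj (delta_mx i 0 : 'cV[C]_n) = (delta_mx 0 i : 'rV[C]_n).
  apply/matrixP => a b; rewrite !mxE; case: eqP; case: eqP => //= _ _; by rewrite ?rmorph1 ?rmorph0.
by rewrite -rowE -colE !mxE.
Qed.

Lemma psd_sqrt n (L : 'M[C]_n) : psd L -> exists K : 'M[C]_n, adj K *m K = L.
Proof.
move=> [hL qL]; have [[U d] [/= uU eL]] := herm_decomp _ _ hL.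
have dge0 i : 0 <= d 0 i.
  have := qL (U *m delta_mx i 0).
  rewrite eL adjM !mulmxA -!(mulmxA _ (adj U) U) uU !mulmx1.
  by rewrite quad_delta mxE mxE eqxx mulr1n rC_ge0.
exists (diag_mx (map_mx (fun x => rC (Num.sqrt x)) d) *m adj U).
rewrite adjM adjK adj_diagf !mulmxA -(mulmxA U) mulmx_diag eL; congr (_ *m diag_mx _ *m _).
apply/matrixP => i j; rewrite !mxE -rCM; congr rC.
by rewrite (ord1 i) -expr2 sqr_sqrtr.
Qed.
Lemma adj_col m1 m2 n (A : 'M[C]_(m1, n)) (B : 'M[C]_(m2, n)) :
  adj (col_mx A B) = row_mx (adj A) (adj B).
Proof. by rewrite /adj_mx tr_col_mx map_row_mx. Qed.

Lemma quad_pos n (b : 'cV[C]_n) : b != 0 -> 0 < (adj b *m b) 0 0.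
Proof.
move=> bn0.
have [i bi] : exists i, b i 0 != 0.
  apply/existsP; apply: contraR bn0 => /existsPn h; apply/eqP/matrixP => i j.
  by rewrite (ord1 j) mxE; apply/eqP; move: (h i); rewrite negbK.
rewrite mxE (bigD1 i) //= ltr_wpDr //.
  by apply: sumr_ge0 => k _; rewrite !mxE mulrC mul_conjC_ge0.
by rewrite !mxE mulrC mul_conjC_gt0.
Qed.

Lemma quad_ge0 n (b : 'cV[C]_n) : 0 <= (adj b *m b) 0 0.
Proof.
have [->|bn0] := eqVneq b 0; first by rewrite mulmx0 mxE.
exact: ltW (quad_pos _ _ bn0).
Qed.

Lemma pd_ext n (X : 'M[C]_n) : pd X -> pd (block_mx X 0 0 1%:M : 'M[C]_(n + n)).
Proof.
move=> [hX qX]; split.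
  by rewrite /Defs.hermitian adj_block !adj0 adj1 hX.
move=> v vn0; rewrite -[v]vsubmxK adj_col mul_row_block !(mulmx0, mul0mx, addr0, add0r).
rewrite mulmx1 mul_row_col mxE.
have [a0|an0] := eqVneq (usubmx v) 0.
  have bn0 : dsubmx v != 0.
    apply: contraNneq vn0 => b0; by rewrite -[v]vsubmxK a0 b0 col_mx0.
  rewrite a0 adj0 !mul0mx; apply: ltr_wpDl; first by rewrite mxE.
  exact: quad_pos.
by rewrite ltr_pwDl ?qX ?quad_ge0.
Qed.
Lemma herm1 n : Defs.hermitian (1%:M : 'M[C]_n).
Proof. exact: adj1. Qed.
Lemma herm0 n : Defs.hermitian (0 : 'M[C]_n).
Proof. exact: adj0. Qed.

Lemma psi_ext n (p s : R) (s0 : s != 0) (L H K X : 'M[C]_n) :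
  adj K *m K = L -> Defs.hermitian L -> Defs.hermitian X ->
  psi p s 0 (block_mx H 0 K 0 : 'M_(n+n)) (block_mx X 0 0 1%:M) = psi p s L H X.
Proof.
move=> hK hL hX.
rewrite /psi /mxpow (mxfun_block _ _ _ _ _ hX (herm1 n)) mxfun1 ?powR1 //.
rewrite adj_block !adj0 !mulmx_block !(mulmx0, mul0mx, addr0, add0r) mulmx1 hK.
have hM : Defs.hermitian (adj H *m mxfun (fun x => powR x p) X *m H + L).
  rewrite /Defs.hermitian adjD !adjM adjK hL mulmxA.
  by rewrite (herm_mxfun _ (fun x => powR x p) X).
rewrite (mxfun_block _ _ _ _ _ hM (herm0 n)) mxfun0 ?powR0 //.
by rewrite mxtrace_block mxtrace0 addr0 addrC.
Qed.
Lemma ext_lin n (A B : 'M[C]_n) t :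
  block_mx (rC t *: A + rC (1-t) *: B) 0 0 1%:M =
  rC t *: block_mx A 0 0 1%:M + rC (1-t) *: block_mx B 0 0 (1%:M : 'M[C]_n).
Proof.
rewrite !scale_block_mx add_block_mx !scaler0 addr0 -scalerDl -rCD.
by rewrite addrCA subrr addr0 rC1 scale1r.
Qed.

Lemma herm_comb n (A B : 'M[C]_n) t : Defs.hermitian A -> Defs.hermitian B ->
  Defs.hermitian (rC t *: A + rC (1-t) *: B).
Proof. by move=> hA hB; rewrite /Defs.hermitian adjD !adjZ !rC_conj hA hB. Qed.

Lemma psd0 n : psd (0 : 'M[C]_n).
Proof. by split; [exact: herm0 | move=> v; rewrite mulmx0 mul0mx mxE]. Qed.

Lemma transfer n (p s : R) : s != 0 -> forall H L : 'M[C]_n, psd L ->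
  exists H' : 'M[C]_(n + n), forall X, Defs.hermitian X ->
    psi p s 0 H' (block_mx X 0 0 1%:M) = psi p s L H X.
Proof.
move=> s0 H L pL; have [K hK] := psd_sqrt _ _ pL.
exists (block_mx H 0 K 0) => X hX; exact: (psi_ext _ _ _ s0 _ _ _ _ hK pL.1 hX).
Qed.
End S.

Theorem lemma2p2 (R : realType) (p s : R) (hs : 0 < s) :
  ((forall (n : nat), (0 < n)%N -> forall (H L : 'M[complex R]_n), psd L ->
      convex_pd (psi p s L H))
   <-> (forall (n : nat), (0 < n)%N -> forall (H : 'M[complex R]_n),
      convex_pd (psi p s 0 H)))
  /\
  ((forall (n : nat), (0 < n)%N -> forall (H L : 'M[complex R]_n), psd L ->
      concave_pd (psi p s L H))
   <-> (forall (n : nat), (0 < n)%N -> forall (H : 'M[complex R]_n),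
      concave_pd (psi p s 0 H))).
Proof.
have s0 : s != 0 by rewrite gt_eqF.
split; split.
- by move=> h n hn H; apply: h => //; exact: psd0.
- move=> h n hn H L pL A B pA pB t ht.
  have [H' eH'] := transfer _ _ p s s0 H L pL.
  have hA := pA.1; have hB := pB.1.
  rewrite -(eH' (rC t *: A + rC (1-t) *: B)); last exact: herm_comb.
  rewrite -(eH' A) // -(eH' B) // ext_lin.
  apply: (h (n + n)%N _ H' _ _ (pd_ext _ _ _ pA) (pd_ext _ _ _ pB) t ht).
  by rewrite addn_gt0 hn.
- by move=> h n hn H; apply: h => //; exact: psd0.
- move=> h n hn H L pL A B pA pB t ht.
  have [H' eH'] := transfer _ _ p s s0 H L pL.
  have hA := pA.1; have hB := pB.1.
  rewrite -(eH' (rC t *: A + rC (1-t) *: B)); last exact: herm_comb.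
  rewrite -(eH' A) // -(eH' B) // ext_lin.
  apply: (h (n + n)%N _ H' _ _ (pd_ext _ _ _ pA) (pd_ext _ _ _ pB) t ht).
  by rewrite addn_gt0 hn.
Qed.
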